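(* Let $k,d$ be positive integers, let $\ell = \lceil \frac{d}{k+1}\rceil - 1$ and $d' = d + \left\lceil k\ell\left(\frac{d}{k+1} - \frac{1}{2}(\ell+1)\right)\right\rceil$. Let $T$ be a tree with at least $d'+1$ edges. Then $T$ contains a vertex $r$ such that for every edge $e \in E(T)$ incident to $r$, the connected component of $T - e$ containing $r$ has at least $\ell+1$ edges. *)

(* Defs.v *)
From HB Require Import structures.
From mathcomp Require Import all_boot all_order all_algebra.
Set Implicit Arguments. Unset Strict Implicit. Unset Printing Implicit Defensive.
Import Order.TTheory GRing.Theory Num.Theory.

Definition simple_graph (V : finType) (adj : rel V) : Prop :=
  symmetric adj /\ irreflexive adj.

Definition edges (V : finType) (adj : rel V) : {set {set V}} :=
  [set A : {set V} | [exists x, exists y, adj x y && (A == [set x; y])]].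

Definition connected_graph (V : finType) (adj : rel V) : Prop :=
  forall x y : V, connect adj x y.

Definition acyclic (V : finType) (adj : rel V) : Prop :=
  forall c : seq V, uniq c -> 3 <= size c -> ~~ cycle adj c.

Definition is_tree (V : finType) (adj : rel V) : Prop :=
  [/\ simple_graph adj, connected_graph adj & acyclic adj].

Definition del_edge (V : finType) (adj : rel V) (ed : {set V}) : rel V :=
  fun x y => adj x y && ([set x; y] != ed).

Definition comp_del (V : finType) (adj : rel V) (ed : {set V}) (r : V) : {set V} :=
  [set v | connect (del_edge adj ed) r v].

Definition comp_del_edges (V : finType) (adj : rel V) (ed : {set V}) (r : V) : nat :=
  #|[set A in edges adj | (A != ed) && (A \subset comp_del adj ed r)]|.

Local Open Scope ring_scope.

Definition ell (k d : nat) : int := Num.ceil ((d%:R / (k.+1)%:R) : rat) - 1.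

Definition dprime (k d : nat) : int :=
  d%:Z + Num.ceil ((k%:R * (ell k d)%:~R *
     (d%:R / (k.+1)%:R - 2^-1 * ((ell k d)%:~R + 1))) : rat).

(* Main.v *)
Require Import Defs.
From HB Require Import structures.
From mathcomp Require Import all_boot all_order all_algebra.
From mathcomp Require Import ring lra zify.
Import Order.TTheory GRing.Theory Num.Theory.
Set Implicit Arguments. Unset Strict Implicit. Unset Printing Implicit Defensive.

Lemma edgeP (V : finType) (adj : rel V) (A : {set V}) :
  reflect (exists x y, adj x y /\ A = [set x; y]) (A \in edges adj).
Proof.
rewrite inE; apply: (iffP existsP) => [[x /existsP [y /andP [h /eqP ->]]]|[x [y [h ->]]]].
  by exists x, y.
by exists x; apply/existsP; exists y; rewrite h eqxx.
Qed.

Lemma edge_at (V : finType) (adj : rel V) (ed : {set V}) (r : V) :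
  simple_graph adj -> ed \in edges adj -> r \in ed -> exists w, adj r w /\ ed = [set r; w].
Proof.
case=> sym irr /edgeP [x [y [h ->]]]; rewrite !inE => /orP [/eqP ->|/eqP ->].
  by exists y.
by exists x; rewrite sym setUC.
Qed.

Lemma comp_step (V : finType) (adj : rel V) (ed : {set V}) (r y z : V) :
  y \in comp_del adj ed r -> del_edge adj ed y z -> z \in comp_del adj ed r.
Proof. rewrite !inE => h1 h2; exact: connect_trans h1 (connect1 h2). Qed.

Lemma cover (V : finType) (adj : rel V) (u v : V) :
  simple_graph adj -> connected_graph adj -> adj u v -> forall x,
  x \in comp_del adj [set u; v] u :|: comp_del adj [set u; v] v.
Proof.
move=> [sym irr] conn huv x.
set e := [set u; v]; set C := _ :|: _.
have step : forall y z, adj y z -> y \in C -> z \in C.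
  move=> y z hyz; rewrite /C; case: (boolP ([set y; z] == e)) => [/eqP E|NE].
    have : z \in [set y; z] by rewrite !inE eqxx orbT.
    by rewrite E !inE => /orP [/eqP ->|/eqP ->] _; rewrite ?in_setU ?inE connect0 ?orbT.
  have hd : del_edge adj e y z by rewrite /del_edge hyz NE.
  rewrite !in_setU => /orP [H|H]; apply/orP; [left|right]; exact: comp_step H hd.
have gen : forall y p, path adj y p -> y \in C -> last y p \in C.
  move=> y p; elim: p y => [|z p IH] y //= /andP [hyz pth] hy.
  exact: IH pth (step _ _ hyz hy).
have /connectP [p pth ->] := conn u x.
by apply: gen pth _; rewrite in_setU inE connect0.
Qed.

Lemma edges_split (V : finType) (adj : rel V) (u v : V) :
  simple_graph adj -> connected_graph adj -> adj u v ->
  (#|edges adj| <= (comp_del_edges adj [set u; v] u + comp_del_edges adj [set u; v] v).+1)%N.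
Proof.
move=> sg conn huv; have [sym irr] := sg.
set e := [set u; v].
have eE : e \in edges adj by apply/edgeP; exists u, v.
rewrite (cardsD1 e) eE add1n ltnS /comp_del_edges.
set Su := [set A in edges adj | (A != e) && (A \subset comp_del adj e u)].
set Sv := [set A in edges adj | (A != e) && (A \subset comp_del adj e v)].
apply: (@leq_trans #|Su :|: Sv|); last by rewrite -cardsUI leq_addr.
apply: subset_leq_card.
apply/subsetP => A; rewrite in_setD1 => /andP [Ae AE].
have /edgeP [x [y [hxy Exy]]] := AE.
have hd : del_edge adj e x y by rewrite /del_edge hxy -Exy Ae.
have := cover sg conn huv x; rewrite in_setU => /orP [H|H].
  rewrite in_setU; apply/orP; left; rewrite inE AE Ae /=.
  by apply/subsetP => z; rewrite Exy in_set2 => /orP [/eqP ->|/eqP ->] //; exact: comp_step H hd.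
rewrite in_setU; apply/orP; right; rewrite inE AE Ae /=.
by apply/subsetP => z; rewrite Exy in_set2 => /orP [/eqP ->|/eqP ->] //; exact: comp_step H hd.
Qed.

Lemma sep (V : finType) (adj : rel V) (u v : V) :
  is_tree adj -> adj u v -> ~~ connect (del_edge adj [set u; v]) u v.
Proof.
case=> [[sym irr] _ acyc] huv; apply/negP => /connectP [p pth].
case: (shortenP pth) => p' pth' up _ lst.
have := acyc (u :: p') up.
have cyc : cycle adj (u :: p').
  rewrite /cycle rcons_path -lst sym huv andbT.
  by apply: sub_path pth' => x y /andP [].
rewrite cyc /=; case: p' pth' up lst {cyc} => [|a [|b q]] //=.
  by move=> _ _ E; move: huv; rewrite -E irr.
  by rewrite andbT => hd _ E; move: hd; rewrite -E /del_edge eqxx andbF.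
by move=> _ _ _ /(_ isT).
Qed.

Lemma grow (V : finType) (adj : rel V) (u v w : V) :
  is_tree adj -> adj u v -> adj v w -> w != u ->
  (comp_del_edges adj [set u; v] u < comp_del_edges adj [set v; w] v)%N.
Proof.
move=> tr huv hvw wu; have [[sym irr] conn acyc] := tr.
set e := [set u; v]; set e' := [set v; w].
have nsep : v \notin comp_del adj e u by rewrite inE; exact: sep.
have ee' : e != e'.
  apply/negP => /eqP E; have : u \in e' by rewrite -E !inE eqxx.
  rewrite !inE => /orP [/eqP uv|/eqP uw].
    by move: huv; rewrite uv irr.
  by rewrite uw eqxx in wu.
have sub : {subset comp_del adj e u <= comp_del adj e' v}.
  have gen : forall y p, path (del_edge adj e) y p -> y \in comp_del adj e u ->
      y \in comp_del adj e' v -> last y p \in comp_del adj e' v.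
    move=> y p; elim: p y => [|z p IH] y //= /andP [hyz pth] hy hy'.
    have hz : z \in comp_del adj e u := comp_step hy hyz.
    apply: IH pth (hz) _; apply: comp_step hy' _.
    rewrite /del_edge; case/andP: (hyz) => -> _ /=.
    apply/negP => /eqP E; have : v \in [set y; z] by rewrite E !inE eqxx.
    rewrite !inE => /orP [/eqP vy|/eqP vz].
      by move: nsep; rewrite vy hy.
    by move: nsep; rewrite vz hz.
  move=> x; rewrite {1}inE => /connectP [p pth ->].
  apply: gen pth _ _; first by rewrite inE connect0.
  rewrite inE; apply: connect1; rewrite /del_edge sym huv /=.
  by rewrite setUC.
have eE : e \in edges adj by apply/edgeP; exists u, v.
rewrite /comp_del_edges.
set S := [set A in edges adj | (A != e) && (A \subset comp_del adj e u)].
set S' := [set A in edges adj | (A != e') && (A \subset comp_del adj e' v)].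
have H : e |: S \subset S'.
  apply/subsetP => A; rewrite in_setU1 => /orP [/eqP ->|].
    rewrite inE eE ee' /=; apply/subsetP => z; rewrite in_set2 => /orP [/eqP ->|/eqP ->].
      by apply: sub; rewrite inE connect0.
    by rewrite inE connect0.
  rewrite inE => /andP [AE /andP [Ae Asub]].
  rewrite inE AE /=; apply/andP; split.
    apply/negP => /eqP E; move: Asub; rewrite E => /subsetP /(_ v).
    by rewrite !inE eqxx => /(_ isT); move: nsep; rewrite inE => /negPf ->.
  by apply: subset_trans Asub _; apply/subsetP.
apply: leq_trans (subset_leq_card H); rewrite cardsU1.
have -> : e \notin S by rewrite inE eqxx andbF.
by [].
Qed.

Local Open Scope ring_scope.
Lemma ell_facts (k d : nat) : (0 < k)%N -> (0 < d)%N ->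
  0 <= ell k d /\ 2 * ell k d + 1 <= d%:Z /\ d%:Z <= dprime k d.
Proof.
move=> k0 d0.
set q : rat := d%:R / (k.+1)%:R.
have qpos : 0 < q by rewrite /q divr_gt0 // ltr0n.
have hk : (2%:R : rat) <= (k.+1)%:R by rewrite ler_nat ltnS.
have qle : 2 * q <= d%:R.
  rewrite /q mulrA ler_pdivrMr ?ltr0n //.
  have : 0 <= (d%:R : rat) by rewrite ler0n.
  nra.
have Llt : (ell k d)%:~R < q by rewrite /ell; exact: ceilB1_lt.
have L0 : 0 <= ell k d.
  by rewrite /ell subr_ge0 -gtz0_ge1 ceil_gt0.
have L2 : 2 * ell k d < d%:Z.
  rewrite -(ltr_int rat) intrM /=.
  have -> : ((d%:Z)%:~R : rat) = d%:R by [].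
  have -> : ((2%:Z)%:~R : rat) = 2 by [].
  lra.
split => //; split; first by rewrite lezD1.
rewrite /dprime lerDl ceil_ge0 -/q.
set L := ell k d.
have LR0 : (0 : rat) <= L%:~R by rewrite ler0z.
have kR : (0 : rat) <= k%:R by rewrite ler0n.
suff : 0 <= (k%:R * L%:~R * (q - 2^-1 * (L%:~R + 1)) : rat) by lra.
have [->|Lp] := eqVneq L 0; first by rewrite mulr0 mul0r.
apply: mulr_ge0; first exact: mulr_ge0.
have L1 : (1 : rat) <= L%:~R by rewrite ler1z -gtz0_ge1 lt0r Lp L0.
lra.
Qed.

Unset Implicit Arguments.
Theorem lemma2p5 (k d : nat) (V : finType) (adj : rel V) :
  (0 < k)%N -> (0 < d)%N ->
  is_tree adj ->
  dprime k d + 1 <= (#|edges adj|%:Z) ->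
  exists r : V, forall ed : {set V}, ed \in edges adj -> r \in ed ->
    ell k d + 1 <= (comp_del_edges adj ed r)%:Z.
Proof.
move=> k0 d0 tr hm.
have [L0 [L2 Ld]] := ell_facts k0 d0.
have [sg conn acyc] := tr; have [sym irr] := sg.
have [l El] : exists l : nat, ell k d = l%:Z.
  by exists `|ell k d|%N; rewrite gez0_abs.
rewrite El in L2 *.
set m := #|edges adj| in hm *.
have hm' : (2 * l + 2 <= m)%N.
  have := le_trans L2 Ld; move: hm; set D := dprime k d; lia.
suff [r hr] : exists r : V, forall ed : {set V}, ed \in edges adj -> r \in ed ->
    (l < comp_del_edges adj ed r)%N.
  by exists r => ed h1 h2; rewrite -[1]/(1%:Z) -PoszD lez_nat addn1; exact: hr.
pose P := fun pr : V * V => adj pr.1 pr.2 && (comp_del_edges adj [set pr.1; pr.2] pr.1 <= l)%N.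
pose F := fun pr : V * V => comp_del_edges adj [set pr.1; pr.2] pr.1.
case: (pickP P) => [p0 Pp0 | noP].
  case: (arg_maxnP F Pp0) => [[u v]] /andP [/= huv small] maxp.
  exists v => ed edE ved; have [w [hvw ->]] := edge_at sg edE ved.
  case: (eqVneq w u) => [->|wu].
    rewrite setUC; have := edges_split sg conn huv; rewrite -/m.
    move: small hm'; lia.
  have gr := grow tr huv hvw wu.
  rewrite ltnNge; apply/negP => sm.
  have := maxp (v, w); rewrite /P /F /= hvw sm => /(_ isT).
  by rewrite leqNgt gr.
have : (0 < m)%N by lia.
rewrite card_gt0 => /set0Pn [ed0 /edgeP [x [y [hxy _]]]].
exists x => ed edE xed; have [w [hxw ->]] := edge_at sg edE xed.
by have := noP (x, w); rewrite /P /= hxw /= => /negbT; rewrite -ltnNge.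
Qed.
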